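(* In the 1-sided False Negative regime, let $\mathcal{S}=\{E_1,\dots,E_k\}$ be a collection of $k$ sets of edges, each with a fixed cyclic order, and assume at least one set in $\mathcal{S}$ contains some realized edge. Consider the procedure DISCOVER$(\mathcal{S})$: repeat rounds; in each round, for $i=1,\dots,k$, query the next edge $e$ in the cyclic order of $E_i$, and if the answer is ``Yes'' return $e$. Then DISCOVER finds and returns a realized edge using at most $2k|E_f|$ queries in expectation, where $E_f$ is the set containing the found edge.
   Context: Noisy query model: each edge is either realized or not (fixed arbitrarily in advance). An oracle answers queries ``Is edge $e$ realized?'' with ``Yes''/``No''; each query costs $1$; answers to distinct queries (including repeated queries of the same edge) are independent. In the 1-sided False Negative regime: for a non-realized edge the answer is always ``No''; for a realized edge the answer is ``No'' with a constant probability $p<1/2$ and ``Yes'' with probability $1-p$. *)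

(* Defs.v *)
From HB Require Import structures.
From mathcomp Require Import all_boot all_order all_algebra.
From mathcomp Require Import all_classical all_reals all_analysis.
Set Implicit Arguments. Unset Strict Implicit. Unset Printing Implicit Defensive.
Import Order.TTheory GRing.Theory Num.Theory.
Local Open Scope classical_set_scope.
Local Open Scope ring_scope.

(* ---- Deterministic schedule of DISCOVER(S) ----
   S = Es : seq (seq Edge), E_i = nth [::] Es i, cyclic order = list order.
   Round r: for i = 0..k-1 (k = size Es), query E_i[r mod |E_i|]
   (empty sets contribute no query). *)
Section Schedule.
Variable Edge : eqType.
Variable Es : seq (seq Edge).

Definition nonempty_sets : seq nat :=
  [seq i <- iota 0 (size Es) | (0 < size (nth [::] Es i))%N].
Definition round_len : nat := size nonempty_sets.
Definition qidx (t : nat) : nat := nth 0 nonempty_sets (t %% round_len).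
Definition qround (t : nat) : nat := t %/ round_len.
Definition qedge (t : nat) : option Edge :=
  let E := nth [::] Es (qidx t) in
  if E is x :: _ then Some (nth x E (qround t %% size E)) else None.
Definition qrealized (realized : pred Edge) (t : nat) : bool :=
  if qedge t is Some e then realized e else false.
End Schedule.

Section Oracle.
Context {d : measure_display} {T : measurableType d} {R : realType}.

Definition mutually_independent_bool (P : probability T R) (X : nat -> T -> bool) :=
  forall (I : seq nat) (b : nat -> bool), uniq I ->
    P (\bigcap_(i in [set` I]) [set w | X i w = b i]) =
    \big[*%E/1%E]_(i <- I) P [set w | X i w = b i].

Definition performed (ans : nat -> T -> bool) (t : nat) (w : T) : bool :=
  [forall s : 'I_t, ~~ ans s w].
Definition first_yes (ans : nat -> T -> bool) (t : nat) (w : T) : bool :=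
  ans t w && performed ans t w.
Definition num_queries (ans : nat -> T -> bool) (w : T) : \bar R :=
  (\sum_(0 <= t <oo) ((performed ans t w : nat)%:R)%:E)%E.
End Oracle.

(* Main.v *)
Require Import Defs.
From HB Require Import structures.
From mathcomp Require Import all_boot all_order all_algebra.
From mathcomp Require Import all_classical all_reals all_analysis.
From mathcomp Require Import lra measurable_realfun.
Import Order.TTheory GRing.Theory Num.Theory.
Local Open Scope classical_set_scope.
Local Open Scope ring_scope.
Section Comb.
Variable Edge : eqType.
Variable Es : seq (seq Edge).
Local Notation L := (round_len Es).
Definition msz a := size (nth [::] Es (qidx Es a)).

Lemma qidx_per a k : qidx Es (a + k * L) = qidx Es a.
Proof. by rewrite /qidx addnC modnMDl. Qed.

Lemma qedge_per a n : qedge Es (a + n * (msz a * L)) = qedge Es a.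
Proof.
have [L0|Lp] := posnP L.
  by rewrite L0 !muln0 addn0.
rewrite /qedge mulnA qidx_per /qround.
have -> : msz a = size (nth [::] Es (qidx Es a)) by [].
case: (nth [::] Es (qidx Es a)) => [//|x E].
rewrite [(a + _)%N]addnC divnMDl //; congr (Some (nth _ _ _)).
by rewrite modnMDl.
Qed.

Lemma qidx_mod t : qidx Es (t %% (msz t * L)) = qidx Es t.
Proof.
set M := (msz t * L)%N.
by rewrite [in RHS](divn_eq t M) addnC /M mulnA qidx_per.
Qed.

Lemma msz_mod t : msz (t %% (msz t * L)) = msz t.
Proof. by rewrite /msz qidx_mod. Qed.

Lemma qedge_mod t : qedge Es (t %% (msz t * L)) = qedge Es t.
Proof.
have h := qedge_per (t %% (msz t * L)) (t %/ (msz t * L)).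
by rewrite msz_mod addnC -divn_eq in h.
Qed.

Lemma qedge_pos t x : qedge Es t = Some x -> (0 < msz t)%N /\ (0 < L)%N.
Proof.
rewrite /qedge /msz.
case E: (nth [::] Es (qidx Es t)) => [//|y E'] _; split => //.
rewrite lt0n; apply/negP => /eqP L0.
have ne0 : nonempty_sets Es = [::] by apply/eqP; rewrite -size_eq0; apply/eqP.
move: E; rewrite /qidx ne0 nth_nil => E.
have : (0 \in nonempty_sets Es)%N.
  rewrite mem_filter E /= mem_iota /= add0n.
  by case: Es E ne0 => //.
by rewrite ne0.
Qed.

Lemma L_le : (L <= size Es)%N.
Proof.
by rewrite /round_len /nonempty_sets size_filter (leq_trans (count_size _ _)) // size_iota.
Qed.

Lemma exists_qr (realized : pred Edge) :
  has (fun E => has realized E) Es -> exists t, qrealized Es realized t.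
Proof.
move=> /hasP [E EEs /hasP [e eE re]].
have [j jlt Ej] : exists2 j, (j < size Es)%N & nth [::] Es j = E.
  by exists (index E Es); [rewrite index_mem | rewrite nth_index].
have jin : j \in nonempty_sets Es.
  by rewrite mem_filter Ej mem_iota /= add0n jlt andbT; case: E eE {EEs Ej}.
set pos := index j (nonempty_sets Es).
have posL : (pos < L)%N by rewrite index_mem.
exists ((index e E) * L + pos)%N.
rewrite /qrealized /qedge /qidx /qround modnMDl modn_small // nth_index //.
rewrite divnMDl ?(leq_ltn_trans _ posL) // divn_small // addn0 Ej.
case: E eE {EEs Ej jin} => [//|x E'] eE.
by rewrite modn_small ?index_mem // nth_index.
Qed.
End Comb.
Arguments msz {Edge}.
Arguments qedge_per {Edge}.
Arguments qidx_per {Edge}.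
Arguments qidx_mod {Edge}.
Arguments msz_mod {Edge}.
Arguments qedge_mod {Edge}.
Arguments qedge_pos {Edge Es t x}.
Arguments L_le {Edge}.
Arguments exists_qr {Edge Es realized}.
Section Prob.
Context (R : realType) (d : measure_display) (T : measurableType d)
  (P : probability T R) (ans : nat -> T -> bool) (p : R).
Hypothesis hm : forall t, measurable [set w | ans t w].
Hypothesis hind : mutually_independent_bool P ans.
Variable s : nat -> nat.
Hypothesis sinj : injective s.
Hypothesis hs : forall i, P [set w | ans (s i) w] = (1 - p)%:E.

Definition Aset n := \bigcap_(i in [set` map s (iota 0 n)]) [set w | ans i w = false].

Lemma mF i : measurable [set w | ans i w = false].
Proof.
have -> : [set w | ans i w = false] = ~` [set w | ans i w].
  by apply/seteqP; split => w /=; case: (ans i w).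
exact: measurableC.
Qed.

Lemma mA n : measurable (Aset n).
Proof.
rewrite /Aset bigcap_seq; elim: (map s (iota 0 n)) => [|x l IH].
  by rewrite big_nil.
by rewrite big_cons; apply: measurableI => //; exact: mF.
Qed.

Lemma PF i : P [set w | ans (s i) w = false] = p%:E.
Proof.
have -> : [set w | ans (s i) w = false] = ~` [set w | ans (s i) w].
  by apply/seteqP; split => w /=; case: (ans (s i) w).
by rewrite probability_setC // hs -EFinB opprB addrC subrK.
Qed.

Lemma PA n : P (Aset n) = (p ^+ n)%:E.
Proof.
rewrite /Aset (hind _ (fun=> false)); last by rewrite map_inj_uniq // iota_uniq.
rewrite big_map (eq_bigr (fun=> p%:E)); last by move=> i _; exact: PF.
rewrite prodEFin; congr EFin.
have -> : iota 0 n = index_iota 0 n by rewrite /index_iota subn0.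
by rewrite prodr_const_nat subn0.
Qed.

End Prob.

Arguments Aset {d T}.
Section Bound.
Context (R : realType) (d : measure_display) (T : measurableType d)
  (ans : nat -> T -> bool).
Variables (a M : nat).
Hypothesis Mpos : (0 < M)%N.
Hypothesis aM : (a < M)%N.
Let s i := (a + i * M)%N.

Lemma perf_A u w : performed ans u w -> Aset ans s (u %/ M) w.
Proof.
move=> /forallP H i /= /mapP [k]; rewrite mem_iota add0n => /andP[_ klt] ->.
have iu : (a + k * M < u)%N.
  apply: (@leq_trans (k.+1 * M)); first by rewrite mulSn ltn_add2r.
  apply: (@leq_trans (u %/ M * M)); last exact: leq_trunc_div.
  by rewrite leq_mul2r klt orbT.
by apply: negbTE; exact: (H (Ordinal iu)).
Qed.

Local Open Scope ereal_scope.

Definition gA n w : R := (M%:R * \1_(Aset ans s n) w)%R.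

Lemma block N w :
  \sum_(0 <= t < N * M) ((\1_(Aset ans s (t %/ M)) w : R)%:E) =
  \sum_(0 <= n < N) (gA n w)%:E.
Proof.
elim: N => [|N IH]; first by rewrite mul0n !big_geq.
rewrite big_nat_recr //= mulSnr (@big_cat_nat _ _ _ (N * M)%N 0 (N * M + M)%N _ _ (leq0n _) (leq_addr _ _)) IH.
congr (_ + _).
rewrite (eq_big_nat _ _ (F2 := fun=> ((\1_(Aset ans s N) w : R)%:E))); last first.
  move=> t /andP[h1 h2]; congr (EFin (indic _ _)); congr Aset.
  apply/eqP; rewrite eqn_leq -ltnS ltn_divLR // leq_divRL // h1 andbT.
  by rewrite mulSnr.
by rewrite sumEFin sumr_const_nat addKn /gA mulr_natl.
Qed.

Lemma nq_le w : num_queries ans w <= \sum_(n <oo) (gA n w)%:E.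
Proof.
have gA0 n : 0 <= (gA n w)%:E.
  by rewrite lee_fin /gA mulr_ge0 // indicE.
apply: lime_le.
  by apply: is_cvg_ereal_nneg_natsum => n _; rewrite lee_fin.
apply: nearW => N.
apply: (@le_trans _ _ (\sum_(0 <= t < N) ((\1_(Aset ans s (t %/ M)) w : R)%:E))).
  apply: lee_sum => t _; rewrite lee_fin indicE.
  case: (boolP (performed ans t w)) => [/perf_A h|_]; last by rewrite /= ler0n.
  by rewrite mem_set.
apply: (@le_trans _ _ (\sum_(0 <= t < N * M) ((\1_(Aset ans s (t %/ M)) w : R)%:E))).
  apply: lee_sum_nneg_natr; last by rewrite leq_pmulr.
  by move=> t _ _; rewrite lee_fin indicE.
rewrite block; exact: nneseries_lim_ge.
Qed.

End Bound.
Arguments gA {R d T}.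
Arguments nq_le {R d T ans a M} Mpos aM w.

Arguments PA {R d T P ans p} hm hind {s} sinj hs n.

Import Order.TTheory GRing.Theory Num.Theory.
Local Open Scope ring_scope.

Lemma geo_le2 (R : realType) (p : R) N : 0 <= p -> p < 1/2 ->
  \sum_(0 <= i < N) p ^+ i <= 2.
Proof.
move=> p0 p2.
suff : \sum_(0 <= i < N) p ^+ i <= 2 - 2 * p ^+ N.
  move/le_trans; apply; rewrite lerBlDr lerDl mulr_ge0 // exprn_ge0 //.
elim: N => [|N IH]; first by rewrite big_geq // expr0; lra.
rewrite big_nat_recr //= exprS.
have hp : 0 <= p ^+ N by rewrite exprn_ge0.
have : p * p ^+ N <= 1/2 * p ^+ N by rewrite ler_wpM2r // ltW.
lra.
Qed.

Lemma zero_lim (R : realType) (r p : R) : 0 <= p -> p < 1/2 ->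
  (forall n, r <= p ^+ n) -> r <= 0.
Proof.
move=> p0 p2 H; rewrite leNgt; apply/negP => r0.
set n := Num.bound r^-1.
have hn : r^-1 < n%:R by apply: archi_boundP; rewrite invr_ge0 ltW.
have h2 : (n%:R : R) < 2 ^+ n by rewrite -natrX ltr_nat ltn_expl.
have h3 : r * 2 ^+ n <= 1.
  apply: (@le_trans _ _ (p ^+ n * 2 ^+ n)).
    by rewrite ler_wpM2r // exprn_ge0.
  rewrite -exprMn exprn_ile1 //; [by rewrite mulr_ge0 | lra].
have h4 : 1 < r * n%:R.
  have rne : r != 0 by rewrite gt_eqF.
  by rewrite -{1}(mulfV rne) ltr_pM2l.
have h5 : r * n%:R < r * 2 ^+ n by rewrite ltr_pM2l.
lra.
Qed.

Section Integ.
Local Open Scope ereal_scope.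
Context (R : realType) (d : measure_display) (T : measurableType d)
  (P : probability T R) (ans : nat -> T -> bool) (p : R).
Hypothesis hm : forall t, measurable [set w | ans t w].
Hypothesis hind : mutually_independent_bool P ans.
Hypothesis p0 : (0 <= p)%R.
Hypothesis p2 : (p < 1 / 2)%R.
Variables a M : nat.
Hypothesis Mpos : (0 < M)%N.
Hypothesis aM : (a < M)%N.
Let s i := (a + i * M)%N.
Hypothesis hs : forall i, P [set w | ans (s i) w] = (1 - p)%:E.

Lemma sinj : injective s.
Proof. by move=> i j; rewrite /s => /addnI /eqP; rewrite eqn_pmul2r // => /eqP. Qed.

Lemma perf_set t : [set w | performed ans t w] = Aset ans id t.
Proof.
apply/seteqP; split => w /=.
  move=> /forallP H i /= /mapP [k]; rewrite mem_iota add0n => /andP[_ klt] ->.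
  by apply: negbTE; exact: (H (Ordinal klt)).
move=> H; apply/forallP => i; apply/negbT; apply: H => /=.
by rewrite map_id mem_iota add0n ltn_ord.
Qed.

Lemma m_perf t : measurable_fun setT
  (fun w : T => (((performed ans t w : nat)%:R : R)%:E)).
Proof.
have -> : (fun w : T => (((performed ans t w : nat)%:R : R)%:E)) =
   EFin \o \1_(Aset ans id t).
  apply/funext => w /=; rewrite indicE -perf_set.
  case: (boolP (performed ans t w)) => h.
    by rewrite (@mem_set _ [set w0 | performed ans t w0] w h).
  have h2 : ~ [set w0 | performed ans t w0] w by move=> /= h3; rewrite h3 in h.
  by rewrite (memNset h2).
apply/measurable_EFinP; apply: measurable_indic; exact: mA.
Qed.

Lemma m_nq : measurable_fun setT (num_queries (R:=R) ans).
Proof.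
apply: (@ge0_emeasurable_sum _ _ _ setT _ xpredT).
  by move=> k x _ _; rewrite lee_fin.
by move=> k _; exact: m_perf.
Qed.


Lemma m_gA n : measurable_fun setT (fun w => (gA (R:=R) ans a M n w)%:E).
Proof.
apply/measurable_EFinP; apply: measurable_funM => //.
apply: measurable_indic; exact: mA.
Qed.

Lemma gA_ge0 n w : 0 <= (gA (R:=R) ans a M n w)%:E.
Proof. by rewrite lee_fin /gA mulr_ge0 // indicE. Qed.

Lemma int_gA n : \int[P]_x (gA (R:=R) ans a M n x)%:E = (M%:R * p ^+ n)%R%:E.
Proof.
rewrite /gA; under eq_integral do rewrite EFinM.
rewrite ge0_integralZl //.
rewrite integral_indic //; last exact: mA.
rewrite setIT; have h := (PA hm hind sinj hs n).
rewrite EFinM; congr (_ * _); exact: h.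
apply: measurableT_comp => //; apply: measurable_indic; exact: mA.
Qed.

Lemma int_bound : \int[P]_x num_queries ans x <= (2 * M%:R)%R%:E.
Proof.
apply: le_trans.
  apply: (ge0_le_integral P measurableT _ m_nq _ (fun x _ => nq_le Mpos aM x)).
  - by move=> x _; apply: nneseries_ge0 => n _ _; rewrite lee_fin.
  - apply: (@ge0_emeasurable_sum _ _ _ setT _ xpredT).
      by move=> k x _ _; exact: gA_ge0.
    by move=> k _; exact: m_gA.
rewrite integral_nneseries //; last by move=> n x _; exact: gA_ge0.
  2: by move=> n; exact: m_gA.
rewrite (eq_eseriesr (fun n _ => int_gA n)).
apply: lime_le.
  by apply: is_cvg_ereal_nneg_natsum => n _; rewrite lee_fin mulr_ge0 // exprn_ge0.
apply: nearW => N.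
rewrite sumEFin lee_fin -mulr_sumr mulrC ler_wpM2r //.
exact: geo_le2.
Qed.

Lemma all_one : P [set w | exists t, ans t w] = 1.
Proof.
set E := [set w | exists t, ans t w].
have mE : measurable E.
  have -> : E = \bigcup_t [set w | ans t w].
    apply/seteqP; split => w /=; first by move=> [t h]; exists t.
    by move=> [t _ h]; exists t.
  exact: bigcupT_measurable.
have H n : P (~` E) <= (p ^+ n)%:E.
  have h := PA hm hind sinj hs n.
  apply: (@le_trans _ _ (P (Aset ans s n))); last by rewrite h.
  apply: le_measure; rewrite ?inE; [exact: measurableC | exact: mA |].
  move=> w /= nE i _; apply/negbTE/negP => hi; by apply: nE; exists i.
have h0 : P (~` E) = 0.
  have G0 : 0 <= P (~` E) := measure_ge0 P _.
  move: H G0; case: (P (~` E)) => [r| |] H H0.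
  - congr EFin; apply/eqP; rewrite eq_le; apply/andP; split.
      by apply: (@zero_lim R r p p0 p2) => n; rewrite -lee_fin; exact: H.
    by rewrite -lee_fin.
  - by have := H 0%N; rewrite leye_eq.
  - by [].
rewrite -(probability_setT P) -(setUv E) measureU //.
- rewrite [X in _ + X](_ : _ = 0%E); first by rewrite addr0.
  exact: h0.
- exact: measurableC.
- by rewrite setICr.
Qed.
End Integ.

Lemma shift_qedge (Edge : eqType) (Es : seq (seq Edge)) t i :
  qedge Es (t %% (msz Es t * round_len Es) + i * (msz Es t * round_len Es))%N
  = qedge Es t.
Proof.
have := qedge_per Es (t %% (msz Es t * round_len Es)) i.
by rewrite msz_mod qedge_mod.
Qed.

Theorem lemma6 (R : realType) (d : measure_display) (T : measurableType d)
  (P : probability T R) (Edge : eqType) (Es : seq (seq Edge))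
  (realized : pred Edge) (p : R) (ans : nat -> T -> bool) :
  0 <= p -> p < 1 / 2 ->
  has (fun E => has realized E) Es ->
  (forall t, measurable [set w | ans t w]) ->
  mutually_independent_bool P ans ->
  (forall t, ~~ qrealized Es realized t -> forall w, ans t w = false) ->
  (forall t, qrealized Es realized t -> P [set w | ans t w] = (1 - p)%:E) ->
  P [set w | exists t, ans t w] = 1%E /\
  (forall w t, first_yes ans t w ->
     (exists2 e, qedge Es t = Some e & realized e) /\
     (\int[P]_x num_queries ans x
        <= ((2 * size Es * size (nth [::] Es (qidx Es t)))%N%:R)%:E)%E).
Proof.
move=> p0 p2 hhas hm hind hfalse htrue.
have key : forall t, qrealized Es realized t ->
    let M := (msz Es t * round_len Es)%N in
    [/\ (0 < M)%N, (t %% M < M)%N &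
     forall i, P [set w | ans (t %% M + i * M)%N w] = (1 - p)%:E].
  move=> t qt M.
  have [e he] : exists e, qedge Es t = Some e.
    by move: qt; rewrite /qrealized; case: (qedge Es t) => [e|] // _; exists e.
  have [h1 h2] := qedge_pos he.
  have Mpos : (0 < M)%N by rewrite /M muln_gt0 h1 h2.
  split => //; first by rewrite ltn_pmod.
  move=> i; apply: htrue.
  by rewrite /qrealized /M shift_qedge.
split.
  have [t qt] := exists_qr hhas.
  have [Mpos aM hs] := key t qt.
  exact: (@all_one R d T P ans p hm hind p0 p2 _ _ Mpos hs).
move=> w t /andP [ht _].
have qt : qrealized Es realized t.
  by apply: contraLR ht => /hfalse ->.
split.
  by move: qt; rewrite /qrealized; case: (qedge Es t) => [e|] // re; exists e.
have [Mpos aM hs] := key t qt.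
apply: le_trans (@int_bound R d T P ans p hm hind p0 p2 _ _ Mpos aM hs) _.
rewrite lee_fin -natrM ler_nat -/(msz Es t).
rewrite -mulnA leq_mul2l /= [(size Es * _)%N]mulnC leq_mul2l (L_le Es) orbT.
done.
Qed.
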